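(* Let $\mathfrak W=\{A_0,\dots,A_p\}$ be a finite collection of finite subsets of $\mathbb N$, let $e,k,y\in\mathbb N$, let $\sigma$ be a finite string of natural numbers, and put $m=(y-1)\left(\prod_{j\le p}|A_j|\right)+1$. Then at least one of the following holds: (1) there exist a selection $S$ of $\mathfrak W$ and a finite tree $F\subseteq\mathbb N^{<\omega}$ such that $F$ is $y$-branching below $\sigma$, every terminal node of $F$ has length $|\sigma|+k$, and $F$ accepts $S$ for $e$; (2) there are fewer than $m$ strings $\tau$ with $\tau^-=\sigma$ (pairwise distinct, i.e. siblings immediately below $\sigma$) each of which is $i$-bad relative to $\langle\mathfrak W,m,e\rangle$ for some $i\le k$.
   Context: Strings are finite sequences of natural numbers, viewed as functions on an initial segment of $\mathbb N$; $|\sigma|$ is the length, and for $|\sigma|>0$, $\sigma^-=\sigma\restriction(|\sigma|-1)$. Two strings $\tau_1\ne\tau_2$ with $\tau_1^-=\tau_2^-=\sigma$ are siblings immediately below $\sigma$. For an oracle program (Turing functional) with index $e$ and a string $\sigma$, $W^\sigma_e$ is the set of $x$ such that the oracle program $e$ with any oracle extending $\sigma$, using only oracle queries below $|\sigma|$ (use $\le|\sigma|$), halts on input $x$. For a finite $S\subseteq\mathbb N$, $\sigma$ accepts $S$ for $e$ if $S\subseteq W^\sigma_e$; a finite tree $F$ accepts $S$ for $e$ if every terminal node of $F$ accepts $S$ for $e$. A selection of a finite collection of sets $\mathfrak W$ is a set containing exactly one element from each member of $\mathfrak W$. A finite tree $F$ is $y$-branching below $\sigma$ (of depth $k$) if every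 node of $F$ is a prefix or extension of $\sigma$, every terminal node has length $|\sigma|+k$, and every node of $F$ extending $\sigma$ (including $\sigma$) of length less than $|\sigma|+k$ has at least $y$ distinct immediate extensions in $F$. Badness is defined inductively: $\sigma$ is 1-bad relative to $\langle\mathfrak W,m,e\rangle$ if $\sigma$ accepts some selection of $\mathfrak W$ for $e$; $\sigma$ is $(n+1)$-bad relative to $\langle\mathfrak W,m,e\rangle$ if $\sigma$ has $m$ distinct extensions of length $|\sigma|+1$ that are $n$-bad relative to $\langle\mathfrak W,m,e\rangle$. *)

(* Defs.v *)
From HB Require Import structures.
From mathcomp Require Import all_boot.
From mathcomp Require Import finmap.

Set Implicit Arguments.
Unset Strict Implicit.
Unset Printing Implicit Defensive.



(* A concrete model of oracle programs: register machines with an     *)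
(* oracle instruction.                                                 *)
Inductive instr := INC of nat | DEC of nat & nat | ORC of nat.

Definition upd (g : nat -> nat) (r v : nat) : nat -> nat :=
  fun i => if i == r then v else g i.

Fixpoint halts_within (f : nat -> nat) (u : nat) (P : seq instr)
    (n pc : nat) (g : nat -> nat) : bool :=
  if size P <= pc then true else
  match n with
  | 0 => false
  | n'.+1 =>
    match nth (INC 0) P pc with
    | INC r => halts_within f u P n' pc.+1 (upd g r (g r).+1)
    | DEC r j => if g r == 0 then halts_within f u P n' j g
                 else halts_within f u P n' pc.+1 (upd g r (g r).-1)
    | ORC r => (g r < u) && halts_within f u P n' pc.+1 (upd g r (f (g r)))
    end
  end.

(* Goedel numbering of programs (surjective, via MathComp's pickling). *)
Definition decode_pair (n : nat) : option (nat * nat)%type := choice.unpickle n.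

Definition decode_instr (k : nat) : instr :=
  match modn k 3 with
  | 0 => INC (divn k 3)
  | 1 => match decode_pair (divn k 3) with
         | Some (r, j) => DEC r j
         | None => INC 0
         end
  | _ => ORC (divn k 3)
  end.

Definition program (e : nat) : seq instr :=
  match (choice.unpickle e : option (seq nat)) with
  | Some s => map decode_instr s
  | None => [::]
  end.

Definition extends_fun (f : nat -> nat) (s : seq nat) : Prop :=
  forall i, i < size s -> f i = nth 0 s i.

(* x \in W^s_e : program e on input x (in register 0), with any oracle *)
(* extending s, halts using only oracle queries below |s|.            *)
Definition W (e : nat) (s : seq nat) (x : nat) : Prop :=
  forall f, extends_fun f s ->
    exists n, halts_within f (size s) (program e) n 0
                (fun i => if i == 0 then x else 0).

Definition accepts (e : nat) (s : seq nat) (S : {fset nat}) : Prop :=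
  forall x, x \in S -> W e s x.

Definition selection (p : nat) (A : nat -> {fset nat}) (S : {fset nat}) : Prop :=
  (forall x, x \in S -> exists j, j <= p /\ x \in A j) /\
  (forall j, j <= p -> (#|` (S `&` A j)|)%fset = 1).

Definition is_tree (F : {fset (seq nat)}) : Prop :=
  [::] \in F /\ forall t n, t \in F -> take n t \in F.

Definition terminal (F : {fset (seq nat)}) (t : seq nat) : Prop :=
  t \in F /\ ~ (exists r, r \in F /\ prefix t r /\ size t < size r).

(* t is an immediate extension of s, i.e. t^- = s *)
Definition child (s t : seq nat) : Prop :=
  prefix s t /\ size t = (size s).+1.

Definition y_branching (y : nat) (s : seq nat) (k : nat) (F : {fset (seq nat)}) : Prop :=
  (forall t, t \in F -> prefix t s \/ prefix s t) /\
  (forall t, terminal F t -> size t = size s + k) /\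
  (forall t, t \in F -> prefix s t -> size t < size s + k ->
     exists L : seq (seq nat), uniq L /\ size L = y /\
       forall r, r \in L -> r \in F /\ child t r).

Definition tree_accepts (e : nat) (F : {fset (seq nat)}) (S : {fset nat}) : Prop :=
  forall t, terminal F t -> accepts e t S.

(* n-badness relative to <W, m, e>  (defined for n >= 1; 0-bad is False) *)
Fixpoint bad (p : nat) (A : nat -> {fset nat}) (m e : nat) (n : nat) (s : seq nat) : Prop :=
  match n with
  | 0 => False
  | n'.+1 =>
    if n' is 0 then exists S, selection p A S /\ accepts e s S
    else exists L : seq (seq nat), uniq L /\ size L = m /\
           forall t, t \in L -> child s t /\ bad p A m e n' t
  end.

(* m = (y - 1) * prod_{j <= p} |A_j| + 1  (truncated subtraction on nat) *)
Definition m_of (p : nat) (A : nat -> {fset nat}) (y : nat) : nat :=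
  (y - 1) * (\prod_(j < p.+1) (#|` A j|)%fset) + 1.

(* Main.v *)
Require Import Defs.
From HB Require Import structures.
From mathcomp Require Import all_boot.
From mathcomp Require Import finmap.
From Stdlib Require Import Classical_Prop.


Lemma halts_mono f u u' P n pc g :
  u <= u' -> halts_within f u P n pc g -> halts_within f u' P n pc g.
Proof.
move=> uu'; elim: n pc g => [|n IH] pc g /=; case: ifP => // _.
case: (nth _ _ _) => [r|r j|r]; first exact: IH.
  by case: ifP => _; apply: IH.
case/andP => h1 h2; rewrite (leq_trans h1 uu') /=; exact: IH.
Qed.

Lemma prefix_take_eq {a l : seq nat} : prefix a l -> a = take (size a) l.
Proof. by rewrite prefixE => /eqP ->. Qed.

Lemma prefix_eq {a b : seq nat} : prefix a b -> size b <= size a -> a = b.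
Proof. by move=> pa h; rewrite {1}(prefix_take_eq pa) take_oversize. Qed.

Lemma prefix_comp {a b l : seq nat} :
  prefix a l -> prefix b l -> size a <= size b -> prefix a b.
Proof.
move=> /prefix_take_eq ha /prefix_take_eq hb hs.
rewrite prefixE hb take_takel // -ha. exact: eqxx.
Qed.

Lemma accepts_mono e (t t' : seq nat) S :
  prefix t t' -> accepts e t S -> accepts e t' S.
Proof.
move=> pt hA x xS f ef.
have ef' : extends_fun f t.
  move=> i hi; rewrite ef; last by apply: leq_trans hi (size_prefix pt).
  by rewrite (prefix_take_eq pt) nth_take.
have [n hn] := hA x xS f ef'; exists n.
exact: halts_mono (size_prefix pt) hn.
Qed.
Definition good (e y : nat) (S : {fset nat}) (s : seq nat) (d : nat)
    (Ls : seq (seq nat)) : Prop :=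
  Ls != [::] /\
  (forall l, l \in Ls -> prefix s l /\ size l = size s + d /\ accepts e l S) /\
  (forall t, prefix s t -> size t < size s + d -> has (prefix t) Ls ->
     exists L : seq (seq nat), uniq L /\ size L = y /\
       forall r, r \in L -> child t r /\ has (prefix r) Ls).

Lemma gather {X Y : eqType} (Q : X -> Y -> Prop) (L : seq X) :
  (forall c, c \in L -> exists z, Q c z) ->
  exists P : seq (X * Y), map fst P = L /\ forall q, q \in P -> Q q.1 q.2.
Proof.
elim: L => [|c L IH] h; first by exists [::].
have [z hz] := h c (mem_head _ _).
have [P [h1 h2]] : exists P : seq (X * Y), map fst P = L /\ forall q, q \in P -> Q q.1 q.2.
  by apply: IH => c' hc'; apply: h; rewrite in_cons hc' orbT.
exists ((c, z) :: P); split; first by rewrite /= h1.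
by move=> q; rewrite in_cons => /orP [/eqP -> //|]; apply: h2.
Qed.

Lemma has_prefix_sub (r : seq nat) (A B : seq (seq nat)) :
  {subset A <= B} -> has (prefix r) A -> has (prefix r) B.
Proof. by move=> sAB /hasP [l lA pl]; apply/hasP; exists l => //; apply: sAB. Qed.

Lemma combine e y S (tau : seq nat) d (C : seq (seq nat)) :
  uniq C -> y <= size C -> C != [::] ->
  (forall c, c \in C -> child tau c /\ exists Lc, good e y S c d Lc) ->
  exists Ls, good e y S tau d.+1 Ls.
Proof.
move=> uC yC C0 hC.
have [P [hP1 hP2]] := gather (fun c Lc => good e y S c d Lc) C
  (fun c hc => (hC c hc).2).
have hPsub : forall q, q \in P -> {subset q.2 <= flatten (map snd P)}.
  move=> q qP l lq; apply/flattenP; exists q.2 => //; exact: map_f.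
have hfl : forall l, l \in flatten (map snd P) -> exists2 q, q \in P & l \in q.2.
  by move=> l /flattenP [x /mapP [q qP ->] lq]; exists q.
have qC : forall q, q \in P -> q.1 \in C by move=> q qP; rewrite -hP1; apply: map_f.
have hasc : forall c, c \in C -> has (prefix c) (flatten (map snd P)).
  move=> c; rewrite -hP1 => /mapP [q qP ->].
  have [g1 [g2 _]] := hP2 q qP.
  case E: q.2 g1 g2 => [//|l Lc] _ g2.
  apply/hasP; exists l; last by have [] := g2 l (mem_head _ _).
  by apply: (hPsub q qP); rewrite E mem_head.
exists (flatten (map snd P)); split; [|split].
- case E: C C0 hasc => [//|c C'] _ /(_ c (mem_head _ _)).
  by case: (flatten _).
- move=> l /hfl [q qP lq].
  have [_ [g2 _]] := hP2 q qP; have [pl [sl al]] := g2 l lq.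
  have [[pc sc] _] := hC q.1 (qC q qP).
  split; [exact: prefix_trans pc pl|split=> //].
  by rewrite sl sc addSnnS.
- move=> t pt st ht.
  case: (ltngtP (size t) (size tau)) => hs.
  + by move: (size_prefix pt); rewrite leqNgt hs.
  + have [l lF ptl] := hasP ht; have [q qP lq] := hfl l lF.
    have [_ [g2 g3]] := hP2 q qP; have [pl _] := g2 l lq.
    have [[pc sc] _] := hC q.1 (qC q qP).
    have pct : prefix q.1 t by apply: prefix_comp pl ptl _; rewrite sc.
    have [L [uL [sL hL]]] : exists L : seq (seq nat), uniq L /\ size L = y /\
       forall r, r \in L -> child t r /\ has (prefix r) q.2.
      apply: g3 => //; first by rewrite sc addSnnS.
      by apply/hasP; exists l.
    exists L; split=> //; split=> // r rL; have [h1 h2] := hL r rL.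
    split=> //; exact: has_prefix_sub (hPsub q qP) h2.
  + have ett : tau = t := prefix_eq pt (eq_leq hs).
    subst t.
    exists (take y C); split; first exact: take_uniq.
    split; first by rewrite size_take; case: ltngtP yC => // ->.
    move=> r /mem_take rC; split; [exact: (hC r rC).1|exact: hasc].
Qed.

Lemma full e y S (tau : seq nat) d :
  accepts e tau S -> exists Ls, good e y S tau d Ls.
Proof.
elim: d tau => [|d IH] tau hA.
  exists [:: tau]; split=> //; split.
    by move=> l; rewrite inE => /eqP ->; rewrite prefix_refl addn0.
  by move=> t pt; rewrite addn0 ltnNge size_prefix.
pose C := [seq rcons tau i | i <- iota 0 (maxn y 1)].
apply: (@combine e y S tau d C).
- by rewrite map_inj_uniq ?iota_uniq //; apply: rcons_injr.
- by rewrite size_map size_iota leq_maxl.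
- by rewrite /C; case: (maxn y 1) (leq_maxr y 1) => [|n].
- move=> c /mapP [i _ ->]; split.
    by split; [exact: prefix_rcons|rewrite size_rcons].
  by apply: IH; apply: accepts_mono hA; exact: prefix_rcons.
Qed.

Fixpoint cs (A : nat -> {fset nat}) (n : nat) : seq (seq nat) :=
  if n is n'.+1 then [seq rcons s x | s <- cs A n', x <- enum_fset (A n')]
  else [:: [::]].

Lemma size_cs A n : size (cs A n) = \prod_(j < n) #|` A j|.
Proof.
elim: n => [|n IH]; first by rewrite big_ord0.
by rewrite /= size_allpairs IH big_ord_recr.
Qed.

Lemma sel_in_cs p A (S : {fset nat}) : selection p A S ->
  S \in map (@seq_fset tt nat) (cs A p.+1).
Proof.
move=> [h1 h2].
have key : forall n, n <= p.+1 -> exists2 s, s \in cs A n &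
   {subset s <= S} /\ forall j x, j < n -> x \in S -> x \in A j -> x \in s.
  elim=> [|n IH] hn; first by exists [::] => //; rewrite mem_seq1.
  have [s sc [hs1 hs2]] := IH (ltnW hn).
  have /cardfs1P [xn hxn] : #|` (S `&` A n)%fset| == 1 by apply/eqP; apply: h2.
  have xnS : (xn \in S) && (xn \in A n) by rewrite -in_fsetI hxn in_fset1.
  case/andP: xnS => xS xA.
  exists (rcons s xn); first by apply: allpairs_f.
  split.
    by move=> z; rewrite mem_rcons inE => /orP [/eqP ->|/hs1].
  move=> j x; rewrite ltnS leq_eqVlt => /orP [/eqP ->|jn] xS' xA'.
    have : x \in (S `&` A n)%fset by rewrite in_fsetI xS' xA'.
    by rewrite hxn in_fset1 => /eqP ->; rewrite mem_rcons mem_head.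
  by rewrite mem_rcons in_cons (hs2 j x jn xS' xA') orbT.
have [s sc [hs1 hs2]] := key p.+1 (leqnn _).
apply/mapP; exists s => //; apply/fsetP => x; rewrite seq_fsetE.
apply/idP/idP; last exact: hs1.
move=> xS; have [j [jp xA]] := h1 x xS; exact: (hs2 j x jp xS xA).
Qed.

Lemma count_bound {T : eqType} (b : nat) (U s : seq T) :
  (forall z, count (pred1 z) s <= b) -> count (mem U) s <= b * size U.
Proof.
move=> hb; elim: U => [|u U IH]; first by rewrite count_pred0.
rewrite /= mulnS.
apply: leq_trans (_ : count (predU (pred1 u) (mem U)) s <= _).
  by apply: sub_count => z; rewrite /= in_cons.
rewrite -(leq_add2r (count (predI (pred1 u) (mem U)) s)) count_predUI.
by rewrite -addnA leq_add // (leq_trans IH) ?leq_addr.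
Qed.

Lemma step p A e y (tau : seq nat) d (L : seq (seq nat)) :
  uniq L -> m_of p A y <= size L ->
  (forall c, c \in L -> child tau c /\
     exists S, selection p A S /\ exists Ls, good e y S c d Ls) ->
  exists S, selection p A S /\ exists Ls, good e y S tau d.+1 Ls.
Proof.
move=> uL mL hL.
have [P [hP1 hP2]] := gather
  (fun c S => selection p A S /\ exists Ls, good e y S c d Ls) L
  (fun c hc => (hL c hc).2).
case: (boolP (has (fun q : seq nat * {fset nat} =>
                     y <= count (pred1 q.2) (map snd P)) P)).
- case/hasP => q qP hq; set S := q.2.
  have [selS _] := hP2 q qP.
  exists S; split=> //.
  pose C := map fst (filter (fun q' : seq nat * {fset nat} => q'.2 == S) P).
  apply: (@combine e y S tau d C).
  + apply: subseq_uniq uL; rewrite -hP1; apply: map_subseq; exact: filter_subseq.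
  + by rewrite size_map size_filter; move: hq; rewrite count_map.
  + rewrite /C; have : q \in filter (fun q' : seq nat * {fset nat} => q'.2 == S) P.
      by rewrite mem_filter qP eqxx.
    by case: filter.
  + move=> c /mapP [q' ]; rewrite mem_filter => /andP [/eqP e2 q'P] ->.
    split; first by apply: (hL _ _).1; rewrite -hP1; apply: map_f.
    by have [_ ] := hP2 q' q'P; rewrite e2.
- move=> /hasPn hn; exfalso.
  pose U := map (@seq_fset tt nat) (cs A p.+1).
  have hb : forall z, count (pred1 z) (map snd P) <= y.-1.
    move=> z; case: (boolP (z \in map snd P)) => [/mapP [q qP ->]|zn].
      by have := hn q qP; rewrite -ltnNge; case: (y) => [|y'].
    by move/count_memPn: zn => ->.
  have := @count_bound _ _ U _ hb.
  have -> : count (mem U) (map snd P) = size (map snd P).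
    apply/eqP; rewrite -all_count; apply/allP => z /mapP [q qP ->].
    exact: sel_in_cs (hP2 q qP).1.
  rewrite size_map /U size_map size_cs.
  have -> : size P = size L by rewrite -hP1 size_map.
  move: mL; rewrite /m_of subn1 => mL hle.
  by move: (leq_trans mL hle); rewrite addn1 ltnn.
Qed.

Lemma bad_good p A e y n (tau : seq nat) d :
  bad p A (m_of p A y) e n tau -> n <= d.+1 ->
  exists S, selection p A S /\ exists Ls, good e y S tau d Ls.
Proof.
elim: n tau d => [//|n IH] tau d.
case: n IH => [|n] IH /=.
  move=> [S [selS aS]] _; exists S; split=> //; exact: full.
move=> [L [uL [sL hL]]] hd.
case: d hd => [//|d] hd.
apply: (@step p A e y tau d L uL); first by rewrite sL.
move=> c cL; have [ch bc] := hL c cL; split=> //.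
exact: IH _ _ bc hd.
Qed.

Definition treeF (s : seq nat) (Ls : seq (seq nat)) : {fset (seq nat)} :=
  @seq_fset tt _ (flatten [seq [seq take n l | n <- iota 0 (size l).+1] | l <- s :: Ls]).

Lemma memF s Ls t : (t \in treeF s Ls) = has (prefix t) (s :: Ls).
Proof.
rewrite /treeF seq_fsetE; apply/flattenP/hasP.
  move=> [x /mapP [l lin ->] /mapP [n _ ->]]; exists l => //; exact: prefix_take.
move=> [l lin pl]; exists [seq take n l | n <- iota 0 (size l).+1].
  by apply/mapP; exists l.
apply/mapP; exists (size t); last exact: prefix_take_eq.
by rewrite mem_iota add0n ltnS size_prefix.
Qed.

Lemma inF2 {e y S s k Ls t} : good e y S s k Ls -> t \in treeF s Ls ->
  exists2 l, l \in Ls & prefix t l.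
Proof.
move=> [L0 [hl _]]; rewrite memF => /hasP [l].
rewrite in_cons => /orP [/eqP -> pts|lL ptl]; last by exists l.
case: Ls L0 hl => [//|l0 Ls'] _ hl.
exists l0; first exact: mem_head.
exact: prefix_trans pts (hl l0 (mem_head _ _)).1.
Qed.

Lemma termF {e y S s k Ls t} : good e y S s k Ls -> terminal (treeF s Ls) t ->
  t \in Ls.
Proof.
move=> g [tF nt]; have [l lL ptl] := inF2 g tF.
case: (ltnP (size t) (size l)) => hs.
  exfalso; apply: nt; exists l; split=> //.
  by rewrite memF; apply/hasP; exists l; rewrite ?in_cons ?lL ?orbT ?prefix_refl.
by rewrite (prefix_eq ptl hs).
Qed.

Theorem lemma3p4 (p : nat) (A : nat -> {fset nat}) (e k y : nat) (s : seq nat) :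
  (exists (S : {fset nat}) (F : {fset (seq nat)}),
      selection p A S /\ is_tree F /\ y_branching y s k F /\
      (forall t, terminal F t -> size t = size s + k) /\
      tree_accepts e F S)
  \/
  ~ (exists L : seq (seq nat),
       uniq L /\ m_of p A y <= size L /\
       forall t, t \in L ->
         child s t /\ exists i, i <= k /\ bad p A (m_of p A y) e i t).
Proof.
case: (Classical_Prop.classic (exists L : seq (seq nat),
       uniq L /\ m_of p A y <= size L /\
       forall t, t \in L ->
         child s t /\ exists i, i <= k /\ bad p A (m_of p A y) e i t));
  last by right.
move=> [L [uL [mL hL]]]; left.
case: k hL => [|d] hL.
  case: L uL mL hL => [|c L] _; first by rewrite /m_of addn1.
  move=> _ /(_ c (mem_head _ _)) [_ [i [i0 bi]]].
  by move: i0 bi; rewrite leqn0 => /eqP ->.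
have [S [selS [Ls g]]] : exists S, selection p A S /\
    exists Ls, good e y S s d.+1 Ls.
  apply: (@step p A e y s d L uL mL) => c cL.
  have [ch [i [id bi]]] := hL c cL; split=> //.
  exact: (@bad_good p A e y i c d bi id).
have termsz : forall t, terminal (treeF s Ls) t -> size t = size s + d.+1.
  move=> t tt; have tL := termF g tt.
  by have [_ [hl _]] := g; have [_ [->]] := hl t tL.
exists S, (treeF s Ls); split=> //; split; [|split; [|split]] => //.
- split; first by rewrite memF /= prefix0s.
  move=> t n; rewrite !memF => /hasP [l lin ptl]; apply/hasP; exists l => //.
  exact: prefix_trans (prefix_take _ _) ptl.
- split; [|split] => //.
  + move=> t tF; have [l lL ptl] := inF2 g tF.
    have [_ [hl _]] := g; have [psl _] := hl l lL.
    case: (leqP (size t) (size s)) => hs.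
      by left; apply: prefix_comp ptl psl hs.
    by right; apply: prefix_comp psl ptl (ltnW hs).
  + move=> t tF pst st; have [l lL ptl] := inF2 g tF.
    have [_ [_ hb]] := g.
    have [L' [uL' [sL' hL']]] := hb t pst st (introT hasP (ex_intro2 _ _ l lL ptl)).
    exists L'; split=> //; split=> // r rL'; have [c1 c2] := hL' r rL'.
    by split=> //; rewrite memF /= c2 orbT.
- move=> t tt; have tL := termF g tt.
  by have [_ [hl _]] := g; have [_ [_ ?]] := hl t tL.
Qed.
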